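(* Let $X$ be a topological space and let $\kappa,\mu\in\mathrm{MG}(X)$ be cardinals with $\kappa<\mu$. Assume that either (1) $\kappa=1$ and $\omega_0<\mu$, or (2) $\omega_0\le\kappa$. Then $X$ is discrete.
   Context: A linearly ordered Abelian group is an Abelian group with a linear order compatible with addition. For $x,y\in G_{>0}$, $x\asymp y$ iff $y\le nx$ and $x\le my$ for some $n,m\in\mathbb{Z}_{\ge1}$; $\mathrm{Arc}(G)=G_{>0}/\asymp$, ordered by $[x]\preceq[y]$ iff ($nx<y$ for all $n$) or $x\asymp y$; $\mathrm{Arc}(G)^\perp$ is $\mathrm{Arc}(G)$ with a new least element adjoined. For a bottomed linearly ordered set $S$ (least element $\perp_S$, $S^*=S\setminus\{\perp_S\}$), $\chi(S)$ is the least cardinal $\kappa>0$ such that some strictly decreasing family $(s_\alpha)_{\alpha<\kappa}$ in $S^*$ has every $t\in S^*$ bounded below by some $s_\alpha$. A $G$-metric on $X$: $d\colon X^2\to G$ with $d(x,y)=0\iff x=y$, $d\ge0$, symmetric, triangle inequality; $\mathrm{Met}(X;G)$ is the set of $G$-metrics generating the topology of $X$ via open balls of radii in $G_{>0}$. $\kappa\in\mathrm{MG}(X)$ iff some linearly ordered Abelian group $G$ with $\chi(\mathrm{Arc}(G)^\perp)=\kappa$ has $\mathrm{Met}(X;G)\ne\emptyset$. *)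

(* Defs.v *)
From HB Require Import structures.
From mathcomp Require Import all_boot all_algebra.
From mathcomp Require Import classical_sets topology.
Set Implicit Arguments. Unset Strict Implicit. Unset Printing Implicit Defensive.
Import GRing.Theory.
Local Open Scope ring_scope.
Local Open Scope classical_set_scope.

(** * Cardinal comparison of types (cardinals represented by types) *)
Definition card_le (A B : Type) : Prop := exists f : A -> B, injective f.
Definition card_eq (A B : Type) : Prop := exists f : A -> B, bijective f.
Definition card_lt (A B : Type) : Prop := card_le A B /\ ~ card_le B A.

Definition is_LOAG (G : zmodType) (le : G -> G -> Prop) : Prop :=
  [/\ (forall x, le x x),
      (forall x y, le x y -> le y x -> x = y),
      (forall x y z, le x y -> le y z -> le x z),
      (forall x y, le x y \/ le y x) &
      (forall x y z, le x y -> le (x + z) (y + z))].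

Section Arch.
Variables (G : zmodType) (le : G -> G -> Prop).
Definition glt (x y : G) : Prop := le x y /\ x <> y.
Definition gpos (x : G) : Prop := glt 0 x.
Definition asymp (x y : G) : Prop :=
  exists n m : nat, [/\ (1 <= n)%N, (1 <= m)%N, le y (x *+ n) & le x (y *+ m)].
(** Arc(G) = G_{>0} / ≍ , equivalence classes represented as sets *)
Definition Arc : Type :=
  {A : G -> Prop | exists x, gpos x /\ A = (fun y => gpos y /\ asymp x y)}.
Definition arc_le (A B : Arc) : Prop :=
  exists x y, [/\ sval A x, sval B y &
     ((forall n : nat, glt (x *+ n) y) \/ asymp x y)].
(** Arc(G)^⊥ : adjoin a new least element (None) *)
Definition arc_bot_le (a b : option Arc) : Prop :=
  match a, b with
  | None, _ => True
  | Some _, None => False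
  | Some A, Some B => arc_le A B
  end.
End Arch.

Definition is_initial_ordinal (I : Type) (lt : I -> I -> Prop) : Prop :=
  [/\ (forall i, ~ lt i i),
      (forall i j k, lt i j -> lt j k -> lt i k),
      (forall i j, [\/ lt i j, i = j | lt j i]),
      well_founded lt &
      (forall i, ~ card_le I {j : I | lt j i})].

Definition coinitial_family (S : Type) (le : S -> S -> Prop) (bot : S)
    (I : Type) (ltI : I -> I -> Prop) : Prop :=
  exists s : I -> S,
    [/\ (forall i, s i <> bot),
        (forall i j, ltI i j -> le (s j) (s i) /\ s j <> s i) &
        (forall t, t <> bot -> exists i, le (s i) t)].

Definition chi_is (S : Type) (le : S -> S -> Prop) (bot : S) (K : Type) : Prop :=
  (exists ltK : K -> K -> Prop,
     [/\ is_initial_ordinal ltK, inhabited K & coinitial_family le bot ltK])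
  /\ (forall (J : Type) (ltJ : J -> J -> Prop),
        is_initial_ordinal ltJ -> inhabited J ->
        coinitial_family le bot ltJ -> card_le K J).

Definition is_Gmetric (X : Type) (G : zmodType) (le : G -> G -> Prop)
    (d : X -> X -> G) : Prop :=
  [/\ (forall x y, d x y = 0 <-> x = y),
      (forall x y, le 0 (d x y)),
      (forall x y, d x y = d y x) &
      (forall x y z, le (d x z) (d x y + d y z))].

Definition in_Met (X : topologicalType) (G : zmodType) (le : G -> G -> Prop)
    (d : X -> X -> G) : Prop :=
  is_Gmetric le d /\
  (forall U : set X, open U <->
     (forall x, U x -> exists r, gpos le r /\
        (forall y, glt le (d x y) r -> U y))).

Definition in_MG (X : topologicalType) (K : Type) : Prop :=
  exists (G : zmodType) (le : G -> G -> Prop),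
    [/\ is_LOAG le,
        chi_is (@arc_bot_le G le) None K &
        exists d : X -> X -> G, in_Met le d].

Definition discrete_top (X : topologicalType) : Prop := forall U : set X, open U.

(* Main.v *)
Require Import Defs.
From mathcomp Require Import all_boot all_algebra.
From mathcomp Require Import classical_sets topology boolp.
Set Implicit Arguments. Unset Strict Implicit. Unset Printing Implicit Defensive.
Import GRing.Theory.
Local Open Scope ring_scope.

Section Grp.
Variables (G : zmodType) (le : G -> G -> Prop).
Hypothesis HL : is_LOAG le.
Local Notation lt := (glt le).

Lemma Lrefl x : le x x. Proof. by case: HL => h _ _ _ _; apply: h. Qed.
Lemma Lanti x y : le x y -> le y x -> x = y. Proof. by case: HL => _ h _ _ _; apply: h. Qed.
Lemma Ltrans x y z : le x y -> le y z -> le x z. Proof. by case: HL => _ _ h _ _; apply: h. Qed.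
Lemma Ltotal x y : le x y \/ le y x. Proof. by case: HL => _ _ _ h _; apply: h. Qed.
Lemma LaddR x y z : le x y -> le (x + z) (y + z). Proof. by case: HL => _ _ _ _ h; apply: h. Qed.
Lemma LaddL x y z : le x y -> le (z + x) (z + y).
Proof. by move=> h; rewrite ![z + _]addrC; apply: LaddR. Qed.
Lemma Ladd2 a b c e : le a b -> le c e -> le (a + c) (b + e).
Proof. move=> h1 h2; apply: Ltrans (LaddR c h1) (LaddL b h2). Qed.

Lemma nlt_le a b : ~ lt a b -> le b a.
Proof.
move=> h; case: (Ltotal b a) => // hab.
case: (pselect (a = b)) => [->|ne]; first exact: Lrefl.
by exfalso; apply: h.
Qed.
Lemma lt_le a b : lt a b -> le a b. Proof. by case. Qed.
Lemma le_lt_F a b : le a b -> lt b a -> False.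
Proof. by move=> h [h1 h2]; apply: h2; apply: Lanti. Qed.
Lemma lt_le_trans a b c : lt a b -> le b c -> lt a c.
Proof.
move=> [h1 h2] h3; split; first exact: Ltrans h1 h3.
by move=> e; subst c; apply: h2; apply: Lanti.
Qed.
Lemma le_lt_trans a b c : le a b -> lt b c -> lt a c.
Proof.
move=> h1 [h2 h3]; split; first exact: Ltrans h1 h2.
by move=> e; subst c; apply: h3; apply: Lanti.
Qed.
Lemma lt_addR a b c : lt a b -> lt (a + c) (b + c).
Proof. by move=> [h1 h2]; split; [exact: LaddR| move/addIr]. Qed.
Lemma lt_addL a b c : lt a b -> lt (c + a) (c + b).
Proof. by move=> h; rewrite ![c + _]addrC; apply: lt_addR. Qed.

Lemma muln_le a b n : le a b -> le (a *+ n) (b *+ n).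
Proof.
move=> h; elim: n => [|n ih]; first by rewrite !mulr0n; apply: Lrefl.
by rewrite !mulrS; apply: Ladd2.
Qed.
Lemma muln_lt a b n : (0 < n)%N -> lt a b -> lt (a *+ n) (b *+ n).
Proof.
case: n => // n _ h; elim: n => [|n ih]; first by rewrite !mulr1n.
rewrite (mulrS a) (mulrS b).
apply: lt_le_trans (lt_addR _ h) _; apply: LaddL; exact: lt_le.
Qed.
Lemma muln_canc a b n : (0 < n)%N -> le (a *+ n) (b *+ n) -> le a b.
Proof.
move=> hn h; apply: nlt_le => hl; exact: le_lt_F h (muln_lt hn hl).
Qed.
Lemma muln_canc_lt a b n : lt (a *+ n) (b *+ n) -> lt a b.
Proof.
move=> h; apply: contrapT => hl; move/nlt_le: hl => hl.
exact: le_lt_F (muln_le n hl) h.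
Qed.
Lemma pos_mono a m n : le 0 a -> (m <= n)%N -> le (a *+ m) (a *+ n).
Proof.
move=> ha hmn; rewrite -(subnKC hmn) mulrnDr.
rewrite -{1}(addr0 (a *+ m)); apply: LaddL.
by have := muln_le (n - m) ha; rewrite mul0rn.
Qed.
Lemma pos_le_muln a n : le 0 a -> (0 < n)%N -> le a (a *+ n).
Proof. by move=> ha hn; have := pos_mono ha hn; rewrite mulr1n. Qed.

Local Notation asy := (asymp le).
Lemma asy_refl x : asy x x.
Proof. by exists 1%N, 1%N; rewrite mulr1n; split => //; apply: Lrefl. Qed.
Lemma asy_sym x y : asy x y -> asy y x.
Proof. by case=> n [m] [h1 h2 h3 h4]; exists m, n. Qed.
Lemma asy_trans x y z : asy x y -> asy y z -> asy x z.
Proof.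
case=> n [m] [h1 h2 h3 h4] [n' [m'] [h1' h2' h3' h4']].
exists (n * n')%N, (m' * m)%N; split; rewrite ?muln_gt0 ?h1 ?h2 ?h1' ?h2' //.
  by rewrite mulrnA; apply: Ltrans h3' (muln_le _ h3).
by rewrite mulrnA; apply: Ltrans h4 (muln_le _ h4').
Qed.


Definition Rr (a b : G) := (forall n, lt (a *+ n) b) \/ asy a b.

Lemma asy_le a b : asy a b -> exists m, (0 < m)%N /\ le a (b *+ m).
Proof. by case=> n [m] [h1 h2 h3 h4]; exists m. Qed.
Lemma Rr_le a b : Rr a b -> exists m, (0 < m)%N /\ le a (b *+ m).
Proof.
case=> [h|h]; last exact: asy_le.
by exists 1%N; split => //; rewrite mulr1n; have := h 1%N; rewrite mulr1n; apply: lt_le.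
Qed.

Lemma ll_resp a b a' b' : (forall n, lt (a *+ n) b) -> asy a a' -> asy b b' ->
  forall n, lt (a' *+ n) b'.
Proof.
move=> h [k [k' [hk _ h3 _]]] [l' [l [_ hl _ h4]]] n.
apply: (@muln_canc_lt _ _ l).
apply: le_lt_trans (muln_le l (muln_le n h3)) _.
rewrite -!mulrnA; exact: lt_le_trans (h _) h4.
Qed.

Lemma Rr_resp a b a' b' : Rr a b -> asy a a' -> asy b b' -> Rr a' b'.
Proof.
move=> [h|h] h1 h2; first by left; apply: ll_resp h h1 h2.
by right; apply: asy_trans (asy_trans (asy_sym h1) h) h2.
Qed.

Lemma Rr_total a b : gpos le a -> gpos le b -> Rr a b \/ Rr b a.
Proof.
move=> ha hb.
case: (pselect (forall n, lt (a *+ n) b)) => [h|h]; first by left; left.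
case: (pselect (forall n, lt (b *+ n) a)) => [h'|h']; first by right; left.
move/existsNP: h => [n /nlt_le hn]; move/existsNP: h' => [m /nlt_le hm].
left; right; exists n, m; split => //.
  case: n hn => // hn; rewrite mulr0n in hn; exfalso; exact: le_lt_F hn hb.
case: m hm => // hm; rewrite mulr0n in hm; exfalso; exact: le_lt_F hm ha.
Qed.

Lemma Rr_trans a b c : Rr a b -> Rr b c -> Rr a c.
Proof.
move=> [h|h] [h'|h'].
- left => n; apply: lt_le_trans (h n) _; apply: lt_le; have := h' 1%N; by rewrite mulr1n.
- left => n; case: h' => l' [l [_ hl _ h4]].
  apply: (@muln_canc_lt _ _ l); rewrite -mulrnA; exact: lt_le_trans (h _) h4.
- left => n; case: h => k' [k [_ hk _ h4]].
  apply: le_lt_trans (muln_le n h4) _; rewrite -mulrnA; exact: h'.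
- by right; apply: asy_trans h h'.
Qed.

Lemma notRr_ll a b : gpos le a -> gpos le b -> ~ Rr b a -> forall n, lt (a *+ n) b.
Proof.
move=> ha hb h; case: (Rr_total ha hb) => // -[//|hh].
by exfalso; apply: h; right; apply: asy_sym.
Qed.

Local Notation Arc := (Arc le).
Lemma arc_pos (A : Arc) a : sval A a -> gpos le a.
Proof. by case: A => /= P [x [hx ->]] []. Qed.
Lemma arc_asy (A : Arc) a b : sval A a -> sval A b -> asy a b.
Proof.
case: A => /= P [x [hx ->]] [_ h1] [_ h2].
exact: asy_trans (asy_sym h1) h2.
Qed.
Lemma arc_ex (A : Arc) : exists a, sval A a.
Proof. by case: A => /= P [x [hx ->]]; exists x; split => //; apply: asy_refl. Qed.

Definition mkArc (d : G) (hd : gpos le d) : Arc :=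
  exist _ (fun y => gpos le y /\ asy d y) (ex_intro _ d (conj hd erefl)).
Lemma mkArc_self d (hd : gpos le d) : sval (mkArc hd) d.
Proof. by split => //; apply: asy_refl. Qed.

Lemma arc_leP (A B : Arc) : arc_le A B -> forall a b, sval A a -> sval B b -> Rr a b.
Proof.
case=> a0 [b0 [h1 h2 h3]] a b ha hb.
exact: Rr_resp h3 (arc_asy h1 ha) (arc_asy h2 hb).
Qed.
Lemma arc_le_of (A B : Arc) a b : sval A a -> sval B b -> Rr a b -> arc_le A B.
Proof. by move=> ha hb h; exists a, b; split. Qed.

Lemma arc_le_total (A B : Arc) : arc_le A B \/ arc_le B A.
Proof.
have [a ha] := arc_ex A; have [b hb] := arc_ex B.
case: (Rr_total (arc_pos ha) (arc_pos hb)) => h.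
  by left; apply: arc_le_of ha hb h.
by right; apply: arc_le_of hb ha h.
Qed.
Lemma arc_le_trans (A B C : Arc) : arc_le A B -> arc_le B C -> arc_le A C.
Proof.
move=> h1 h2; have [a ha] := arc_ex A; have [b hb] := arc_ex B; have [c hc] := arc_ex C.
apply: (arc_le_of ha hc); apply: Rr_trans (arc_leP h1 ha hb) (arc_leP h2 hb hc).
Qed.

Lemma abl_total (a b : option Arc) : arc_bot_le a b \/ arc_bot_le b a.
Proof. case: a; case: b => //=; try by [left|right]. by move=> ??; apply: arc_le_total. Qed.
Lemma abl_trans (a b c : option Arc) :
  arc_bot_le a b -> arc_bot_le b c -> arc_bot_le a c.
Proof. by case: a; case: b; case: c => //= ???; apply: arc_le_trans. Qed.

End Grp.

Lemma wf_min (W : Type) (lt : W -> W -> Prop) (P : W -> Prop) x :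
  well_founded lt -> P x -> exists y, P y /\ forall z, lt z y -> ~ P z.
Proof.
move=> wf px; apply: contrapT => hn.
suff : forall y, ~ P y by move/(_ x).
apply: (well_founded_ind wf) => y ih py; apply: hn; exists y; split => //.
Qed.

Lemma card_le_trans A B C : card_le A B -> card_le B C -> card_le A C.
Proof. by move=> [f hf] [g hg]; exists (g \o f) => x y /hg /hf. Qed.

Lemma sig_inj (W : Type) (D : W -> Prop) (a b : {w | D w}) : sval a = sval b -> a = b.
Proof. by case: a; case: b => /= ? ? ? ? e; apply: eq_exist. Qed.

Section Min.
Variables (S : Type) (le : S -> S -> Prop) (bot : S) (K : Type).
Hypothesis Htot : forall a b, le a b \/ le b a.
Hypothesis Htr : forall a b c, le a b -> le b c -> le a c.
Hypothesis Hmin : forall (J : Type) (ltJ : J -> J -> Prop),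
  is_initial_ordinal ltJ -> inhabited J -> coinitial_family le bot ltJ -> card_le K J.
Variables (W : Type) (ltW : W -> W -> Prop).
Hypothesis Hirr : forall i, ~ ltW i i.
Hypothesis Htrans : forall i j k, ltW i j -> ltW j k -> ltW i k.
Hypothesis Htri : forall i j, [\/ ltW i j, i = j | ltW j i].
Hypothesis Hwf : well_founded ltW.

Definition ltsub (D : W -> Prop) (a b : {w | D w}) := ltW (sval a) (sval b).
Arguments ltsub D a b : clear implicits.
Definition Rj (j : W) := exists D : W -> Prop,
  (forall w, D w -> ltW w j) /\ coinitial_family le bot (ltsub D).

Lemma ltsub_wf D : well_founded (ltsub D).
Proof.
suff h : forall w, Acc ltW w -> forall a : {w | D w}, sval a = w -> Acc (ltsub D) a.
  by move=> a; apply: (h _ (Hwf (sval a))).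
move=> w; elim=> w' _ ih a ea; constructor => b hb.
apply: (ih (sval b)) => //; by rewrite -ea.
Qed.

Lemma claim_R (D : W -> Prop) (d : {w | D w})
  (e : {w | D w} -> {j : {w | D w} | ltsub D j d}) :
  injective e -> coinitial_family le bot (ltsub D) -> Rj (sval d).
Proof.
move=> einj [sD [hs1 hs2 hs3]].
pose g := fun j => sval (sval (e j)).
have ginj : forall j j', g j = g j' -> j = j'.
  by move=> j j' h; apply: einj; apply: sig_inj; apply: sig_inj.
pose E := fun gm => exists j, g j = gm.
pose pre := fun gm => match pselect (E gm) with left h => sval (cid h) | right _ => d end.
have pre_spec : forall gm, E gm -> g (pre gm) = gm.
  move=> gm hE; rewrite /pre; case: (pselect (E gm)) => // h.
  exact: (svalP (cid h)).
pose psi := fun gm => sD (pre gm).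
pose D' := fun gm => E gm /\ forall gm', E gm' -> ltW gm' gm ->
   le (psi gm) (psi gm') /\ psi gm <> psi gm'.
exists D'; split.
  move=> w [[j <-] _]; rewrite /g; exact: (svalP (e j)).
exists (fun a => psi (sval a)); split.
- by move=> a; apply: hs1.
- by move=> a b hab; case: (svalP b) => _ h; apply: h => //; case: (svalP a).
- move=> t ht; have [j hj] := hs3 t ht.
  have pj : E (g j) /\ le (psi (g j)) t.
    split; first by exists j.
    by rewrite /psi (ginj _ _ (pre_spec _ (ex_intro _ j erefl))).
  have [y [[Ey ley] hy]] := wf_min (P := fun gm => E gm /\ le (psi gm) t) Hwf pj.
  have D'y : D' y.
    split => // gm' Egm' lt'.
    have nle : ~ le (psi gm') t by move=> h; apply: (hy gm' lt').
    have lt1 : le t (psi gm') by case: (Htot t (psi gm')) => // h.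
    split; first exact: Htr ley lt1.
    by move=> eq; apply: nle; rewrite -eq.
  by exists (exist _ y D'y).
Qed.

Lemma claim_D (D : W -> Prop) (w0 : W) (s0 : W -> S) :
  s0 w0 <> bot ->
  coinitial_family le bot (ltsub D) -> (forall d, D d -> ~ Rj d) -> card_le K W.
Proof.
move=> hw0 hc hnR.
have inh : inhabited {w | D w}.
  by case: hc => s [_ _ h3]; have [i _] := h3 _ hw0; constructor.
apply: (@card_le_trans _ {w | D w}); last first.
  exists (fun a : {w | D w} => sval a) => a b; exact: sig_inj.
have hi : is_initial_ordinal (ltsub D).
  split.
  - by move=> i; apply: Hirr.
  - by move=> i j k; apply: Htrans.
  - move=> i j; case: (Htri (sval i) (sval j)) => h.
    + exact: Or31.
    + apply: Or32; exact: sig_inj.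
    + exact: Or33.
  - exact: ltsub_wf.
  - move=> d [e einj]; apply: (hnR (sval d)); first exact: (svalP d).
    exact: (claim_R einj hc).
exact: (Hmin hi inh hc).
Qed.

Lemma min_le (w0 : W) : coinitial_family le bot ltW -> card_le K W.
Proof.
move=> hc; have [s [hs1 hs2 hs3]] := hc.
case: (pselect (exists j, Rj j)) => [[j hj]|hn].
  have [j0 [[D [hD hcD]] hmin]] := wf_min Hwf hj.
  apply: (claim_D (hs1 w0) hcD) => d /hD hd; exact: hmin.
apply: (claim_D (D := fun _ => True) (hs1 w0)); last by move=> d _ h; apply: hn; exists d.
exists (fun a => s (sval a)); split.
- by move=> a; apply: hs1.
- by move=> a b hab; apply: hs2.
- by move=> t /hs3 [i hi]; exists (exist _ i I).
Qed.
End Min.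

Section Top.
Variable X : topologicalType.
Variables (G : zmodType) (le : G -> G -> Prop).
Hypothesis HL : is_LOAG le.
Variable d : X -> X -> G.
Hypothesis hd : in_Met le d.

Lemma ball_open x r : open (fun y => glt le (d x y) r).
Proof.
case: hd => [[_ _ _ htri] hop]; apply/hop => y hy.
exists (r - d x y); split.
  have := lt_addR HL (- d x y) hy; by rewrite subrr.
move=> z hz; apply: (le_lt_trans HL (htri x y z)).
have := lt_addL HL (d x y) hz; by rewrite [X in glt _ _ X]addrCA subrr addr0.
Qed.

Lemma nbhd_ball (O : set X) x : open O -> O x ->
  exists r, gpos le r /\ forall y, glt le (d x y) r -> O y.
Proof. by case: hd => _ hop /hop h /h. Qed.

Definition NI x := forall r, gpos le r -> exists y, y <> x /\ glt le (d x y) r.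

Lemma NI_of x : ~ open (fun y => y = x) -> NI x.
Proof.
move=> hno r hr; apply: contrapT => hn; apply: hno.
case: hd => _ hop; apply/hop => z -> {z}; exists r; split => // y hy.
apply: contrapT => ne; apply: hn; by exists y.
Qed.

Lemma exists_nonopen : ~ discrete_top X -> exists x : X, ~ open (fun y => y = x).
Proof.
move=> hnd; apply: contrapT => hn; apply: hnd => U.
case: hd => _ hop; apply/hop => x hx.
have : open (fun y => y = x) by apply: contrapT => h; apply: hn; exists x.
move/hop => /(_ x erefl) [r [hr h]]; exists r; split => // y /h ->. done.
Qed.

Definition CB (A : Arc le) x y := forall q, sval A q -> forall n, glt le (d x y *+ n) q.

Lemma mainT (M : Type) (hchi : chi_is (@arc_bot_le G le) None M) x (hNI : NI x)
  (I : Type) (N : I -> set X)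
  (hN : forall i, exists r, gpos le r /\ forall y, glt le (d x y) r -> N i y)
  (hsep : forall y, y <> x -> exists i, ~ N i y) : card_le M I.
Proof.
case: hchi => [[ltM [hinit hinh [u [hu1 hu2 hu3]]]] hmin].
case: hinit => Mirr Mtr Mtri Mwf _.
have hf : forall i, exists b, exists U, u b = Some U /\ forall y, CB U x y -> N i y.
  move=> i; have [r [hr hri]] := hN i.
  have [b hb] := hu3 (Some (mkArc hr)) ltac:(by []).
  exists b; move: hb (hu1 b); case: (u b) => // U hUR _; exists U; split => // y hy.
  apply: hri; have [q hq] := arc_ex HL U.
  have [m [hm hqm]] := Rr_le (arc_leP HL hUR hq (mkArc_self HL hr)).
  apply: (@muln_canc_lt _ _ HL _ _ m); exact: (lt_le_trans HL (hy q hq m) hqm).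
pose f := fun i => sval (cid (hf i)).
pose D := fun b => exists i, f i = b.
have [a0 ha0] : exists a, gpos le a.
  case: hinh => b; move: (hu1 b); case: (u b) => // A _.
  have [a ha] := arc_ex HL A; exists a; exact: arc_pos ha.
have [y0 [y0x _]] := hNI a0 ha0.
have [i0 _] := hsep y0 y0x.
have Df : forall i, D (f i) by move=> i; exists i.
pose ltC := @ltsub _ ltM D.
have hCI : card_le {b | D b} I.
  have pick : forall c : {b | D b}, {i | f i = sval c}.
    by move=> c; apply: cid; exact: (svalP c).
  exists (fun c => sval (pick c)) => c c' e.
  apply: sig_inj; rewrite -(svalP (pick c)) -(svalP (pick c')).
  by rewrite e.
apply: card_le_trans _ hCI.
apply: (@min_le _ _ None M (@abl_total _ _ HL) (@abl_trans _ _ HL) hmin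
          {b | D b} ltC _ _ _ _ (exist _ (f i0) (Df i0))).
- by move=> c; apply: Mirr.
- by move=> ? ? ?; apply: Mtr.
- move=> c c'; case: (Mtri (sval c) (sval c')) => h.
  + exact: Or31.
  + apply: Or32; exact: sig_inj.
  + exact: Or33.
- exact: ltsub_wf.
exists (fun c => u (sval c)); split.
- by move=> c; apply: hu1.
- by move=> c c' h; apply: hu2.
- case=> // A _; apply: contrapT => hn.
  have hnc : forall c : {b | D b}, ~ arc_bot_le (u (sval c)) (Some A).
    by move=> c h; apply: hn; exists c.
  have [a ha] := arc_ex HL A.
  have [y [yx hya]] := hNI _ (arc_pos ha).
  have [i hi] := hsep y yx.
  have [U [hU hUN]] := svalP (cid (hf i)).
  apply: hi; apply: hUN => q hq n.
  have hnU : ~ arc_le U A.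
    by move=> h; apply: (hnc (exist _ (f i) (Df i))); rewrite /= /f hU.
  have hll := notRr_ll HL (arc_pos ha) (arc_pos hq) (fun h => hnU (arc_le_of hq ha h)) n.
  exact: (le_lt_trans HL (muln_le HL n (lt_le hya)) hll).
Qed.
End Top.

Lemma unit_init : is_initial_ordinal (fun _ _ : unit => False).
Proof.
split => //.
- by move=> _ [].
- by case; case; constructor 2.
- by move=> i [f _]; case: (f tt).
Qed.

Lemma card_le_unit_F (K : Type) : card_le nat K -> card_le K unit -> False.
Proof.
move=> h1 h2; have [f hf] := card_le_trans h1 h2.
have : (0 = 1)%N by apply: hf; case: (f 0%N); case: (f 1%N).
done.
Qed.

Section Fin.
Variable X : topologicalType.
Variables (G : zmodType) (le : G -> G -> Prop).
Hypothesis HL : is_LOAG le.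
Variable d : X -> X -> G.
Hypothesis hd : in_Met le d.

Lemma d_pos x y : y <> x -> gpos le (d x y).
Proof.
case: hd => [[h0 hp _ _] _] ne; split; first exact: hp.
by move=> e; apply: ne; symmetry; apply/h0.
Qed.

Lemma d_self x : d x x = 0.
Proof. by case: hd => [[h0 _ _ _] _]; apply/h0. Qed.

Lemma ball_center x r : gpos le r -> glt le (d x x) r.
Proof. by rewrite d_self. Qed.

Lemma halve x : NI le d x -> forall r, gpos le r -> exists h, gpos le h /\ le (h + h) r.
Proof.
move=> hNI r hr; have [y [yx hy]] := hNI r hr.
have hp := d_pos yx; set p := d x y in hp hy *.
case: (pselect (le (p + p) r)) => hpp; first by exists p.
have h1 : le r (p + p) by case: (Ltotal HL r (p + p)).
exists (r - p); split.
  have := lt_addR HL (- p) hy; by rewrite subrr.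
have h2 : le (r - p) p by have := LaddR HL (- p) h1; rewrite addrK.
have := Ladd2 HL h2 (Lrefl HL (r - p)); by rewrite [p + _]addrC subrK.
Qed.

Lemma halve_pow x : NI le d x -> forall r, gpos le r ->
  forall k, exists h, gpos le h /\ le (h *+ (2 ^ k)) r.
Proof.
move=> hNI r hr; elim=> [|k [h [hh hle]]]; first by exists r; split => //; rewrite expn0 mulr1n; apply: Lrefl.
have [h' [hh' hle']] := halve hNI hh.
exists h'; split => //; rewrite expnS mulrnA.
apply: (Ltrans HL _ hle); apply: (muln_le HL); by rewrite mulr2n.
Qed.
End Fin.

Theorem proposition2p49 (X : topologicalType) (K M : Type) :
  in_MG X K -> in_MG X M -> card_lt K M ->
  ((card_eq K unit /\ card_lt nat M) \/ card_le nat K) ->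
  discrete_top X.
Proof.
move=> [GK [leK [HLK chiK [dK hdK]]]] [GM [leM [HLM chiM [dM hdM]]]] [hKM hnMK] hcase.
apply: contrapT => hnd.
have [x hx] := exists_nonopen hdK hnd.
have NIK := NI_of hdK hx; have NIM := NI_of hdM hx.
have chiK' := chiK.
case: chiK' => [[ltK [initK [k0] [s [hs1 hs2 hs3]]]] hminK].
case: hcase => [[[g [g' gK _]] [hnatM hnMnat]]|hnatK].
-
  have ginj : forall i j : K, i = j.
    by move=> i j; rewrite -(gK i) -(gK j); case: (g i); case: (g j).
  move: (hs1 k0) (hs3); case E: (s k0) => [S0|] // _ hs3'.
  have minS : forall T, arc_le S0 T.
    move=> T; have [i hi] := hs3' (Some T) ltac:(by []).
    by move: hi; rewrite (ginj i k0) E.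
  have [rho0 hrho0] := arc_ex HLK S0.
  have hk := halve_pow HLK hdK NIK (arc_pos hrho0).
  pose r := fun k => sval (cid (hk k)).
  have hr : forall k, gpos leK (r k) /\ leK (r k *+ (2 ^ k)) rho0.
    by move=> k; exact: (svalP (cid (hk k))).
  apply: hnMnat.
  apply: (mainT HLM chiM NIM (N := fun k y => glt leK (dK x y) (r k))).
  + move=> k; exact: (nbhd_ball hdM (ball_open HLK hdK x (r k)) (ball_center hdK x (hr k).1)).
  + move=> y yx; have hp := d_pos hdK yx.
    have [m [hm hle]] := Rr_le (arc_leP HLK (minS (mkArc hp)) hrho0 (mkArc_self HLK hp)).
    exists m => hy.
    have hm2 : (m <= 2 ^ m)%N by apply: ltnW; apply: ltn_expl.
    have h1 := muln_lt HLK (n := 2 ^ m) ltac:(by rewrite expn_gt0) hy.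
    apply: (le_lt_F HLK _ h1).
    apply: (Ltrans HLK (hr m).2); apply: (Ltrans HLK hle).
    exact: (pos_mono HLK (lt_le hp) hm2).
-
  have noMin : forall SS : Arc leK, exists a, gpos leK a /\
      forall rho, sval SS rho -> forall n, glt leK (a *+ n) rho.
    move=> SS; apply: contrapT => hn; apply: (card_le_unit_F hnatK).
    have [rho0 hrho0] := arc_ex HLK SS.
    apply: (hminK unit (fun _ _ => False) unit_init (inhabits tt)).
    exists (fun _ => Some SS); split => //.
    case=> // T _; exists tt => /=.
    have [tau htau] := arc_ex HLK T.
    apply: (arc_le_of hrho0 htau).
    case: (Rr_total HLK (arc_pos hrho0) (arc_pos htau)) => // -[hll|has].
      exfalso; apply: hn; exists tau; split; first exact: arc_pos htau.
      move=> rho hrho; apply: (ll_resp HLK hll _ (arc_asy HLK hrho0 hrho)).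
      exact: (asy_refl HLK).
    by right; apply: asy_sym.
  apply: hnMK.
  apply: (mainT HLM chiM NIM (N := fun a y => match s a with
                                      | Some SS => CB dK SS x y | None => True end)).
  + move=> a; move: (hs1 a); case: (s a) => // SS _.
    have [a' [ha' hS]] := noMin SS.
    have [r [hr hball]] := nbhd_ball hdM (ball_open HLK hdK x a') (ball_center hdK x ha').
    exists r; split => // y /hball hy rho hrho n.
    apply: (le_lt_trans HLK _ (hS rho hrho n)); apply: (muln_le HLK); exact: (lt_le hy).
  + move=> y yx; have hp := d_pos hdK yx.
    have [a ha] := hs3 (Some (mkArc hp)) ltac:(by []).
    exists a; move: ha (hs1 a); case: (s a) => // SS hSD _ hCB.
    have [rho hrho] := arc_ex HLK SS.
    have [m [hm hle]] := Rr_le (arc_leP HLK hSD hrho (mkArc_self HLK hp)).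
    exact: (le_lt_F HLK hle (hCB rho hrho m)).
Qed.
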